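(* Let $N$ qudits (each $\mathbb{C}^N$) be in the $N$-singlet $|S^{(N)}_N(\boldsymbol\alpha^{(0)})\rangle$, where $\boldsymbol\alpha^{(0)}=\{|\alpha^{(0)}_i\rangle\}_{i=1}^N$ is an orthonormal basis. For $m=1,\dots,M$ (with $M<N$), party $m$ measures qudit $m$ in an orthonormal basis $B_m=\{|\alpha^{(m)}_i\rangle\}_{i=1}^N$, where $|\alpha^{(m)}_i\rangle=U^{(m)}|\alpha^{(m-1)}_i\rangle$. Here $U^{(1)}$ is an arbitrary unitary on $\mathbb{C}^N$. For $m\ge2$, let $n_1,\dots,n_{m-1}$ be the indices of the outcomes already obtained; then $U^{(m)}$ is an arbitrary unitary that acts as the identity on each $|\alpha^{(m-1)}_{n_k}\rangle$, $k<m$, and maps the span of the remaining $N-m+1$ vectors $\{|\alpha^{(m-1)}_i\rangle\}_{i\notin\{n_1,\dots,n_{m-1}\}}$ into itself. Whatever the outcomes $|\alpha^{(m)}_{n_m}\rangle$, the final state is, up to a global phase, $$|\alpha^{(1)}_{n_1}\rangle_1\cdots|\alpha^{(M)}_{n_M}\rangle_M\otimes|S^{(N-M)}_{N-M}(\boldsymbol\alpha^{(M)};n_1,\dots,n_M)\rangle_{M+1,\dots,N}.$$ That is, the unmeasured parties share an $(N-M)$-singlet written in the basis $B_M$ with the levels $|\alpha^{(M)}_{n_1}\rangle,\dots,|\alpha^{(M)}_{n_M}\rangle$ excluded.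
   Context: For an orthonormal basis $\boldsymbol\alpha=\{|\alpha_i\rangle\}_{i=1}^N$ of $\mathbb{C}^N$, the $N$-singlet is $|S^{(N)}_N(\boldsymbol\alpha)\rangle=\frac{1}{\sqrt{N!}}\sum_{\pi\in S_N}\operatorname{sgn}(\pi)|\alpha_{\pi(1)},\dots,\alpha_{\pi(N)}\rangle$. For a set $\{n_1,\dots,n_M\}$ of distinct indices, $|S^{(N-M)}_{N-M}(\boldsymbol\alpha;n_1,\dots,n_M)\rangle$ denotes the totally antisymmetric normalized state of $N-M$ qudits built from the basis vectors $\{|\alpha_i\rangle\}_{i\notin\{n_1,\dots,n_M\}}$: $\frac{1}{\sqrt{(N-M)!}}\sum_\sigma\operatorname{sgn}(\sigma)|\alpha_{\sigma(1)},\dots,\alpha_{\sigma(N-M)}\rangle$, where $\sigma$ ranges over bijections onto the complementary index set. *)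

(* Defs.v *)
(* Complex amplitudes live in an arbitrary
   numClosedFieldType C (e.g. complex numbers / algC), with conjugation x^*. *)
From HB Require Import structures.
From mathcomp Require Import all_boot all_order all_algebra all_fingroup.
Set Implicit Arguments. Unset Strict Implicit. Unset Printing Implicit Defensive.
Import Order.TTheory GRing.Theory Num.Theory.
Local Open Scope ring_scope.

Section Defs.
Variables (C : numClosedFieldType) (N : nat).

(* A state of N qudits (each C^N) is given by its amplitudes in the
   computational product basis |x_0,...,x_{N-1}>, x : {ffun 'I_N -> 'I_N}. *)
Definition state := {ffun 'I_N -> 'I_N} -> C.

Definition mxadj (A : 'M[C]_N) : 'M[C]_N := \matrix_(i, j) (A j i)^*.

Definition unitary (A : 'M[C]_N) : Prop := mxadj A *m A = 1%:M.

(* Vectors of a basis are the COLUMNS of the matrix a: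
   |alpha_i> has components a k i, k : 'I_N. *)

Definition singlet (a : 'M[C]_N) : state := fun x =>
  (sqrtC (N`!)%:R)^-1 *
  \sum_(s : 'S_N) (-1) ^+ s * \prod_(p : 'I_N) a (x p) (s p).

Definition upd (x : {ffun 'I_N -> 'I_N}) (q : nat) (y : 'I_N)
  : {ffun 'I_N -> 'I_N} := [ffun j => if val j == q then y else x j].

(* unnormalized post-measurement state: projector |v><v| applied to qudit q
   (q is the 0-based position, given as a nat; the product over the single
   position j with val j = q is just v (x_q)) *)
Definition proj (q : nat) (v : 'I_N -> C) (psi : state) : state := fun x =>
  (\prod_(j : 'I_N | val j == q) v (x j)) *
  \sum_(y : 'I_N) (v y)^* * psi (upd x q y).

Definition normsq (psi : state) : C := \sum_x `|psi x| ^+ 2.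

(* Sequential measurements: party m (m = 1..) measures qudit m (0-based
   position m-1) in the basis alpha m and obtains outcome index n m.
   post alpha n psi0 m = unnormalized state after parties 1..m. *)
Fixpoint post (alpha : nat -> 'M[C]_N) (n : nat -> 'I_N) (psi0 : state)
    (m : nat) : state :=
  match m with
  | 0 => psi0
  | m'.+1 => proj m' (fun i => alpha m'.+1 i (n m'.+1)) (post alpha n psi0 m')
  end.

(* (N-M)-singlet on qudits M+1..N (0-based positions M..N-1), in the basis
   a with the levels a_{n 1},...,a_{n M} excluded:
     1/sqrt((N-M)!) sum_sigma sgn(sigma) |a_{sigma(M+1)},...,a_{sigma(N)}>,
   sigma ranging over bijections from the positions M..N-1 onto the
   complementary index set 'I_N \ {n 1,...,n M}.  Such a sigma is encoded as
   the unique permutation s of 'I_N extending it by s p = n (p+1) for p < M;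
   sgn(sigma) is taken to be the sign of s (a fixed convention; any other
   identification changes the state only by a global sign). *)
Definition singlet_excl (M : nat) (a : 'M[C]_N) (n : nat -> 'I_N) : state :=
  fun x =>
  (sqrtC ((N - M)`!)%:R)^-1 *
  \sum_(s : 'S_N | [forall p : 'I_N, (p < M)%N ==> (s p == n p.+1)])
     (-1) ^+ s * \prod_(p : 'I_N | (M <= p)%N) a (x p) (s p).

Definition final_target (M : nat) (alpha : nat -> 'M[C]_N) (n : nat -> 'I_N)
  : state := fun x =>
  (\prod_(p : 'I_N | (p < M)%N) alpha p.+1 (x p) (n p.+1)) *
  singlet_excl M (alpha M) n x.

Definition prev_outcome (n : nat -> 'I_N) (m : nat) (j : 'I_N) : bool :=
  [exists k : 'I_m, (0 < k)%N && (n k == j)].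

End Defs.

(* Main.v *)
Require Import Defs.
From HB Require Import structures.
From mathcomp Require Import all_boot all_order all_algebra all_fingroup.
Set Implicit Arguments. Unset Strict Implicit. Unset Printing Implicit Defensive.
Import Order.TTheory GRing.Theory Num.Theory.
Local Open Scope ring_scope.

Section Aux.
Variables (C : numClosedFieldType) (N : nat).
Implicit Types (A B b : 'M[C]_N).

Lemma adjM A B : mxadj (A *m B) = mxadj B *m mxadj A.
Proof.
apply/matrixP => i j; rewrite !mxE rmorph_sum; apply: eq_bigr => k _.
by rewrite !mxE rmorphM mulrC.
Qed.

Lemma unitary_mul A B : unitary A -> unitary B -> unitary (A *m B).
Proof.
rewrite /unitary => HA HB; rewrite adjM mulmxA -(mulmxA (mxadj B)) HA.
by rewrite mulmx1 HB.
Qed.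

Lemma unitaryE b i j : unitary b -> \sum_y (b y i)^* * b y j = (i == j)%:R.
Proof.
rewrite /unitary => Hb; have := congr1 (fun M : 'M[C]_N => M i j) Hb; rewrite /= !mxE => <-.
by apply: eq_bigr => k _; rewrite !mxE.
Qed.

Lemma unitary_r b : unitary b -> b *m mxadj b = 1%:M.
Proof. exact: mulmx1C. Qed.

Definition G (m : nat) (n : nat -> 'I_N) (b : 'M[C]_N)
    (x : {ffun 'I_N -> 'I_N}) : C :=
  \sum_(s : 'S_N | [forall p : 'I_N, (p < m)%N ==> (s p == n p.+1)])
     (-1) ^+ s * \prod_(p : 'I_N) b (x p) (s p).

Definition H (m : nat) (n : nat -> 'I_N) (b : 'M[C]_N)
    (x : {ffun 'I_N -> 'I_N}) : C :=
  \sum_(s : 'S_N | [forall p : 'I_N, (p < m)%N ==> (s p == n p.+1)])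
     (-1) ^+ s * \prod_(p : 'I_N | (m <= p)%N) b (x p) (s p).

Lemma GH m n b x :
  G m n b x = (\prod_(p : 'I_N | (p < m)%N) b (x p) (n p.+1)) * H m n b x.
Proof.
rewrite /G /H mulr_sumr; apply: eq_bigr => s /forallP Hs.
rewrite mulrCA; congr (_ * _).
rewrite (bigID (fun p : 'I_N => (p < m)%N)) /=; congr (_ * _).
  by apply: eq_bigr => p Hp; move/implyP: (Hs p) => /(_ Hp) /eqP ->.
by apply: eq_bigl => p; rewrite ltnNge negbK.
Qed.


Definition Mx m n b (x : {ffun 'I_N -> 'I_N}) : 'M[C]_N :=
  \matrix_(p, j) if (p < m)%N then (j == n p.+1)%:R else b (x p) j.

Lemma Hdet m n b x : H m n b x = \det (Mx m n b x).
Proof.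
rewrite /H big_mkcond /=; apply: eq_bigr => s _.
case: ifP => [/forallP Hs | /negbT].
  congr (_ * _).
  rewrite [RHS](bigID (fun p : 'I_N => (p < m)%N)) /= [X in _ = X * _]big1 ?mul1r.
    by apply: eq_big => [p|p Hp]; [rewrite -leqNgt | rewrite mxE ifN // -leqNgt].
  by move=> p Hp; rewrite mxE Hp; move/implyP: (Hs p) => /(_ Hp) ->.
rewrite negb_forall => /existsP [p]; rewrite negb_imply => /andP [Hp Hsp].
by rewrite (bigD1 p) //= mxE Hp (negbTE Hsp) mul0r mulr0.
Qed.

Lemma H_mul m n b B x :
  (forall p : 'I_N, (p < m)%N -> forall i, B (n p.+1) i = (n p.+1 == i)%:R) ->
  H m n (b *m B) x = H m n b x * \det B.
Proof.
move=> HB; rewrite !Hdet -det_mulmx; congr (\det _); apply/matrixP => p j.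
rewrite !mxE; case: ifP => Hp.
  rewrite (bigD1 (n p.+1)) //= big1 ?addr0.
    by rewrite mxE Hp eqxx mul1r HB // eq_sym.
  by move=> k Hk; rewrite mxE Hp (negbTE Hk) mul0r.
by apply: eq_bigr => k _; rewrite mxE Hp.
Qed.

Lemma G_mul m n b B x :
  (forall p : 'I_N, (p < m)%N -> forall i, B (n p.+1) i = (n p.+1 == i)%:R) ->
  (forall p : 'I_N, (p < m)%N -> forall i, B i (n p.+1) = (i == n p.+1)%:R) ->
  G m n (b *m B) x = G m n b x * \det B.
Proof.
move=> HB HB'; rewrite !GH H_mul // mulrA; congr (_ * _ * _).
apply: eq_bigr => p Hp; rewrite mxE (bigD1 (n p.+1)) //= big1 ?addr0.
  by rewrite HB' // eqxx mulr1.
by move=> k Hk; rewrite HB' // (negbTE Hk) mulr0.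
Qed.


Lemma R_succ m n (s : 'S_N) (Hm : (m < N)%N) :
  [forall p : 'I_N, (p < m.+1)%N ==> (s p == n p.+1)] =
  [forall p : 'I_N, (p < m)%N ==> (s p == n p.+1)] &&
  (s (Ordinal Hm) == n m.+1).
Proof.
apply/forallP/andP => [H1 | [/forallP H1 H2] p].
  split; last by move/implyP: (H1 (Ordinal Hm)); apply.
  apply/forallP => p; apply/implyP => Hp; move/implyP: (H1 p); apply.
  exact: ltnW.
apply/implyP; rewrite ltnS leq_eqVlt => /orP [/eqP Hp | Hp].
  have Ep : p = Ordinal Hm by apply: val_inj.
  by rewrite Ep.
by move/implyP: (H1 p); apply.
Qed.

Lemma proj_G m n b x : (m < N)%N -> unitary b ->
  proj m (fun i => b i (n m.+1)) (G m n b) x = G m.+1 n b x.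
Proof.
move=> Hm Hb; set j0 := Ordinal Hm.
rewrite /proj (big_pred1 j0); last first.
  by move=> j; rewrite /= -val_eqE.
rewrite {2}/G (eq_bigl _ _ (fun s => R_succ n s Hm)) big_mkcondr /=.
rewrite /G.
under eq_bigr do rewrite mulr_sumr.
rewrite exchange_big mulr_sumr; apply: eq_bigr => s Hs.
have Hupd y : \prod_(p : 'I_N) b (upd x m y p) (s p) =
   b y (s j0) * \prod_(p : 'I_N | p != j0) b (x p) (s p).
  rewrite (bigD1 j0) //= ffunE eqxx; congr (_ * _).
  apply: eq_bigr => p Hp; rewrite /upd ffunE ifN //.
under eq_bigr do rewrite Hupd.
have -> : \sum_(y < N) (b y (n m.+1))^* *
     ((-1) ^+ s * (b y (s j0) * \prod_(p | p != j0) b (x p) (s p))) =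
   (-1) ^+ s * \prod_(p | p != j0) b (x p) (s p) *
   \sum_(y < N) (b y (n m.+1))^* * b y (s j0).
  rewrite mulr_sumr; apply: eq_bigr => y _.
  by rewrite [RHS]mulrC -!mulrA; congr (_ * _); rewrite mulrCA.
rewrite unitaryE // eq_sym; case: eqP => [Heq | _]; last by rewrite !mulr0.
rewrite (_ : true%:R = 1) // mulr1 [X in _ = _ * X](bigD1 j0) //= -Heq mulrCA mulrA.
by [].
Qed.


Lemma prod_eq_perm (s t : 'S_N) :
  \prod_(p : 'I_N) ((t p == s p)%:R : C) = (t == s)%:R.
Proof.
case: (eqVneq t s) => [-> | Hts].
  by rewrite big1 // => p _; rewrite eqxx.
have [p Hp] : exists p, t p != s p.
  apply/existsP; move: Hts; apply: contraR; rewrite negb_exists => /forallP H.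
  by apply/eqP/permP => p; move: (H p); rewrite negbK => /eqP.
by rewrite (bigD1 p) //= (negbTE Hp) mul0r.
Qed.

Lemma normG m n b : unitary b ->
  \sum_x G m n b x * (G m n b x)^* =
  #|[pred s : 'S_N | [forall p : 'I_N, (p < m)%N ==> (s p == n p.+1)]]|%:R.
Proof.
move=> Hb.
have E x : G m n b x * (G m n b x)^* =
  \sum_(s : 'S_N | [forall p : 'I_N, (p < m)%N ==> (s p == n p.+1)])
  \sum_(t : 'S_N | [forall p : 'I_N, (p < m)%N ==> (t p == n p.+1)])
   ((-1) ^+ s * (-1) ^+ t) *
    \prod_(p : 'I_N) (b (x p) (s p) * (b (x p) (t p))^*).
  rewrite /G rmorph_sum mulr_suml; apply: eq_bigr => s _.
  rewrite mulr_sumr; apply: eq_bigr => t _.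
  by rewrite rmorphM rmorph_sign rmorph_prod big_split /= mulrACA.
under eq_bigr do rewrite E.
rewrite exchange_big; under eq_bigr do rewrite exchange_big.
have E2 (s t : 'S_N) : \sum_(x : {ffun 'I_N -> 'I_N})
    ((-1) ^+ s * (-1) ^+ t) *
    \prod_(p : 'I_N) (b (x p) (s p) * (b (x p) (t p))^*) =
    ((-1) ^+ s * (-1) ^+ t) * (t == s)%:R.
  rewrite -mulr_sumr -(bigA_distr_bigA (fun (p : 'I_N) (i : 'I_N) => b i (s p) * (b i (t p))^*)).
  rewrite -prod_eq_perm; congr (_ * _); apply: eq_bigr => p _.
  by rewrite -(unitaryE _ _ Hb); apply: eq_bigr => i _; rewrite mulrC.
under eq_bigr do under eq_bigr do rewrite E2.
rewrite -sumr_const; apply: eq_bigr => s Hs.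
rewrite (bigD1 s) //= eqxx mulr1 big1 ?addr0.
  by rewrite -signr_addb addbb expr0.
by move=> t /andP [_ /negbTE ->]; rewrite mulr0.
Qed.


Lemma card_ge m : (m <= N)%N -> #|[set p : 'I_N | (m <= p)%N]| = (N - m)%N.
Proof.
elim: m => [_ | m IH Hm].
  have -> : [set p : 'I_N | (0 <= p)%N] = setT by apply/setP => p; rewrite !inE.
  by rewrite cardsT card_ord subn0.
have := IH (ltnW Hm); rewrite (cardsD1 (Ordinal Hm)) inE /= leqnn.
have -> : [set p : 'I_N | (m <= p)%N] :\ Ordinal Hm = [set p : 'I_N | (m < p)%N].
  apply/setP => p; rewrite !inE ltn_neqAle -val_eqE /= eq_sym.
  by [].
rewrite add1n subnS => <-; by [].
Qed.

Lemma card_R m n (s0 : 'S_N) : (m <= N)%N ->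
  [forall p : 'I_N, (p < m)%N ==> (s0 p == n p.+1)] ->
  #|[pred s : 'S_N | [forall p : 'I_N, (p < m)%N ==> (s p == n p.+1)]]|
  = (N - m)`!.
Proof.
move=> HmN /forallP Hs0.
set A := [set p : 'I_N | (m <= p)%N].
rewrite -card_ge // -card_perm -[RHS](card_imset _ (@mulIg _ s0)).
apply: eq_card => s; rewrite /=.
apply/forallP/imsetP => [Hs | [t Ht ->] p].
  exists (s * s0^-1)%g; last by rewrite -mulgA mulVg mulg1.
  apply/subsetP => p; rewrite !inE permM; apply: contraR; rewrite -ltnNge => Hp.
  move/implyP: (Hs p) => /(_ Hp) /eqP ->.
  move/implyP: (Hs0 p) => /(_ Hp) /eqP <-.
  by rewrite permK.
apply/implyP => Hp; rewrite permM (out_perm Ht) //; last by rewrite inE -ltnNge.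
by move/implyP: (Hs0 p); apply.
Qed.


Lemma singlet_G n a x : singlet a x = (sqrtC (N`!)%:R)^-1 * G 0 n a x.
Proof.
rewrite /singlet /G; congr (_ * _); apply: eq_bigl => s.
by symmetry; apply/forallP => p; rewrite ltn0.
Qed.

Lemma proj_lin q v (psi phi : state C N) c x :
  (forall y, psi y = c * phi y) -> proj q v psi x = c * proj q v phi x.
Proof.
move=> Hp; rewrite /proj mulrCA; congr (_ * _); rewrite mulr_sumr.
apply: eq_bigr => y _; rewrite mulrCA; congr (_ * _); exact: Hp.
Qed.

Lemma colfix (U A : 'M[C]_N) k j : U *m col k A = col k A -> (U *m A) j k = A j k.
Proof.
move=> HU; have := congr1 (fun M : 'M[C]_(N, 1) => M j 0) HU; rewrite /= !mxE => <-.
by apply: eq_bigr => l _; rewrite !mxE.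
Qed.

Lemma target_G M (alpha : nat -> 'M[C]_N) n x :
  (forall p : 'I_N, (p < M)%N -> forall i, alpha M i (n p.+1) = alpha p.+1 i (n p.+1)) ->
  final_target M alpha n x = (sqrtC ((N - M)`!)%:R)^-1 * G M n (alpha M) x.
Proof.
move=> HC; rewrite /final_target /singlet_excl GH mulrCA; congr (_ * (_ * _)).
by apply: eq_bigr => p Hp; rewrite HC.
Qed.

End Aux.

Unset Implicit Arguments.

Theorem corollary1 (C : numClosedFieldType) (N M : nat)
    (alpha U : nat -> 'M[C]_N) (n : nat -> 'I_N) :
  (M < N)%N ->
  (* alpha^{(0)} is an orthonormal basis *)
  unitary (alpha 0%N) ->
  (* alpha^{(m)}_i = U^{(m)} alpha^{(m-1)}_i with U^{(m)} unitary *)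
  (forall m : nat, (1 <= m <= M)%N ->
     unitary (U m) /\ alpha m = U m *m alpha m.-1) ->
  (* for m >= 2: U^{(m)} fixes alpha^{(m-1)}_{n_k}, k < m ... *)
  (forall m k : nat, (2 <= m <= M)%N -> (1 <= k < m)%N ->
     U m *m col (n k) (alpha m.-1) = col (n k) (alpha m.-1)) ->
  (* ... and maps the span of the remaining alpha^{(m-1)}_i into itself *)
  (forall (m : nat) (i : 'I_N), (2 <= m <= M)%N -> ~~ prev_outcome n m i ->
     exists c : 'I_N -> C,
       (forall j, prev_outcome n m j -> c j = 0) /\
       U m *m col i (alpha m.-1)
         = \sum_(j : 'I_N) c j *: col j (alpha m.-1)) ->
  (* the outcomes n 1, ..., n M occur (nonzero probability) *)
  (exists x, post alpha n (singlet (alpha 0%N)) M x != 0) ->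
  (* the normalized final state equals the target up to a global phase *)
  exists c : C, `|c| = 1 /\
    forall x,
      post alpha n (singlet (alpha 0%N)) M x
        / sqrtC (normsq (post alpha n (singlet (alpha 0%N)) M))
      = c * final_target M alpha n x.
Proof.
move=> HMN Ha0 HU Hfix _ [x0 Hx0].
have Hunit : forall m, (m <= M)%N -> unitary (alpha m).
  elim => [//|m IH Hm].
  have [HUm ->] := HU m.+1 (Hm).
  exact: unitary_mul HUm (IH (ltnW Hm)).
have Hcol1 : forall m k i, (1 <= k <= m)%N -> (m.+1 <= M)%N ->
    alpha m.+1 i (n k) = alpha m i (n k).
  move=> m k i /andP [Hk1 Hkm] Hm.
  have [_ ->] := HU m.+1 Hm.
  apply: colfix; apply: (Hfix m.+1 k).
    by rewrite Hm andbT ltnS (leq_trans Hk1 Hkm).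
  by rewrite Hk1 ltnS.
have Hcol : forall k m i, (1 <= k <= m)%N -> (m <= M)%N ->
    alpha m i (n k) = alpha k i (n k).
  move=> k; elim => [|m IH] i /andP [Hk1 Hkm] Hm.
    by move: (leq_trans Hk1 Hkm).
  rewrite leq_eqVlt in Hkm; case/orP: Hkm => [/eqP -> // | Hkm].
  rewrite Hcol1 ?Hk1 //; apply: IH => //; first by rewrite Hk1.
  exact: ltnW.
have Hinv : forall m, (m <= M)%N -> exists lam, forall x,
    post alpha n (singlet (alpha 0%N)) m x = lam * G m n (alpha m) x.
  elim => [_ | m IH Hm].
    by exists (sqrtC (N`!)%:R)^-1 => x /=; apply: singlet_G.
  have [lam Hlam] := IH (ltnW Hm).
  set B := mxadj (alpha m.+1) *m alpha m.
  have HBa : alpha m.+1 *m B = alpha m.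
    by rewrite mulmxA unitary_r ?mul1mx //; apply: Hunit.
  have HB1 : forall p : 'I_N, (p < m)%N -> forall i,
      B (n p.+1) i = (n p.+1 == i)%:R.
    move=> p Hp i; rewrite mxE -(unitaryE _ _ (Hunit m (ltnW Hm))).
    by apply: eq_bigr => j _; rewrite mxE (Hcol1 m p.+1 j).
  have HB2 : forall p : 'I_N, (p < m)%N -> forall i,
      B i (n p.+1) = (i == n p.+1)%:R.
    move=> p Hp i; rewrite mxE -(unitaryE _ _ (Hunit m.+1 Hm)).
    by apply: eq_bigr => j _; rewrite mxE (Hcol1 m p.+1 j).
  exists (lam * \det B) => x /=.
  have Hy : forall y, G m n (alpha m) y = \det B * G m n (alpha m.+1) y.
    by move=> y; rewrite -{1}HBa G_mul // mulrC.
  rewrite (proj_lin _ _ _ Hlam) (proj_lin _ _ _ Hy).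
  rewrite proj_G ?mulrA //.
    exact: leq_trans Hm (ltnW HMN).
  exact: Hunit.
have [lam Hlam] := Hinv M (leqnn M).
set K : C := sqrtC ((N - M)`!)%:R.
have HK : K != 0 by rewrite sqrtC_eq0 pnatr_eq0 -lt0n fact_gt0.
have HT x : final_target M alpha n x = K^-1 * G M n (alpha M) x.
  apply: target_G => p Hp i; apply: Hcol => //.
set kap := lam * K.
have Hpost x : post alpha n (singlet (alpha 0%N)) M x = kap * final_target M alpha n x.
  by rewrite Hlam HT /kap -mulrA mulVKf.
have Hk0 : kap != 0.
  by apply: contraNneq Hx0 => Hk; rewrite Hpost Hk mul0r.
have [s0 Hs0] : exists s0 : 'S_N,
    [forall p : 'I_N, (p < M)%N ==> (s0 p == n p.+1)].
  case: (pickP [pred s : 'S_N | [forall p : 'I_N, (p < M)%N ==> (s p == n p.+1)]])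
    => [s0 Hs0 | Hnone]; first by exists s0.
  move: Hx0; rewrite Hlam /G big_pred0 ?mulr0 ?eqxx //.
have HnT : normsq (final_target M alpha n) = 1.
  rewrite /normsq.
  have -> : \sum_x `|final_target M alpha n x| ^+ 2 =
      \sum_x (K^-1 * K^-1) * (G M n (alpha M) x * (G M n (alpha M) x)^*).
    apply: eq_bigr => x _; rewrite normCK HT rmorphM mulrACA; congr (_ * _ * _).
    by apply: geC0_conj; rewrite invr_ge0 sqrtC_ge0 ler0n.
  rewrite -mulr_sumr normG; last by apply: Hunit.
  rewrite (card_R (ltnW HMN) Hs0) -invfM -expr2 /K sqrtCK mulVf //.
  by rewrite pnatr_eq0 -lt0n fact_gt0.
have Hnorm : normsq (post alpha n (singlet (alpha 0%N)) M) = `|kap| ^+ 2.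
  rewrite /normsq (eq_bigr (fun x => `|kap| ^+ 2 * `|final_target M alpha n x| ^+ 2)).
    by rewrite -mulr_sumr -/(normsq _) HnT mulr1.
  by move=> x _; rewrite Hpost normrM exprMn.
exists (kap / `|kap|); split.
  by rewrite normrM normfV normr_id divff // normr_eq0.
move=> x; by rewrite Hnorm sqrCK ?normr_ge0 // Hpost mulrAC.
Qed.
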